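(* Let $\mathcal{E}=(E,\leq,\sharp)$ be a prime event structure and let $e,e'\in E$ be concurrent, $e\,||\,e'$. Then there exists a configuration $C$ of $\mathcal{E}$ and processes $P_1,P_2,P_3,P_4$ such that $\emptyset\triangleright\textsc{espsi}(\mathcal{E},C)\xrightarrow{\overline{e}e}P_1$, $\emptyset\triangleright P_1\xrightarrow{\overline{e'}e'}P_2$, $\emptyset\triangleright\textsc{espsi}(\mathcal{E},C)\xrightarrow{\overline{e'}e'}P_3$, $\emptyset\triangleright P_3\xrightarrow{\overline{e}e}P_4$, and $P_2=P_4$.
   Context: A prime event structure is a triple $\mathcal{E}=(E,\leq,\sharp)$ where $E$ is a set of events (names from a nominal set), $\leq$ is a partial order on $E$ with $\{d\mid d\leq e\}$ finite for every $e$, and $\sharp$ is an irreflexive symmetric relation on $E$ with conflict heredity ($d\leq e$ and $d\sharp f$ imply $e\sharp f$). Two events are concurrent, $d\,||\,e$, iff none of $d\leq e$, $e\leq d$, $d\sharp e$ holds. A configuration is a finite, conflict-free, downward-closed subset of $E$. Psi-calculus fragment. Processes: assertion processes $(\!|\Psi|\!)$, output prefixes $\overline{M}\langle N\rangle.P$, case processes $\mathbf{case}\ \varphi_1:P_1,\dots,\varphi_n:P_n$, and parallel compositions (also of infinite families). Frames: $\mathcal{F}((\!|\Psi|\!))=\Psi$, $\mathcal{F}(P\mid Q)=\mathcal{F}(P)\otimes\mathcal{F}(Q)$ (composition over all components for families), and the frame of prefixed and case processes is the unit $\mathbf{1}$. Transitions $\Psi\triangleright P\xrightarrow{\alpha}P'$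 are generated by: (Out) if $\Psi\vdash M\leftrightarrow K$ then $\Psi\triangleright\overline{M}\langle N\rangle.P\xrightarrow{\overline{K}N}P$; (Case) if $\Psi\triangleright P_i\xrightarrow{\alpha}P'$ and $\Psi\vdash\varphi_i$ then $\Psi\triangleright\mathbf{case}\ \tilde\varphi:\tilde P\xrightarrow{\alpha}P'$; (Par) if $\Psi\otimes\mathcal{F}(Q)\triangleright P\xrightarrow{\alpha}P'$ then $\Psi\triangleright P\mid Q\xrightarrow{\alpha}P'\mid Q$, symmetrically for $Q$, and for a parallel family one component moves in context $\Psi$ composed with the frames of all other components, the others remaining unchanged. Assertion processes have no transitions. Event-psi instance over $E$: terms are elements of $E$; conditions are pairs $(L,R)$ of subsets of $E$; assertions are subsets of $E$; $\otimes=\cup$; $\mathbf{1}=\emptyset$; entailment: $\Psi\vdash(L,R)$ iff $L\subseteq\Psi$ and $\Psi\cap R=\emptyset$, and $\Psi\vdash a\leftrightarrow b$ iff $a=b$. Translation: $\textsc{espsi}(\mathcal{E},C)=\big|_{e\in E}P_e$ where $P_e=(\!|\{e\}|\!)$ if $e\in C$ and otherwise $P_e=\mathbf{case}\ \varphi_e:\overline{e}\langle e\rangle.(\!|\{e\}|\!)$, with $\varphi_e=(\{d\in E\mid d\leq e,\ d\neq e\},\{d\in E\mid d\sharp e\})$. Processes are compared as $E$-indexed parallel families. The paper writes the transition labelled $\overline{e}e$ simply as $\xrightarrow{e}$. *)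

(* Defs.v *)
From Stdlib Require Import List ClassicalEpsilon.
Import ListNotations.
Set Implicit Arguments.

Record pes (E : Type) := Pes {
  le : E -> E -> Prop;
  cf : E -> E -> Prop;
  le_refl : forall e, le e e;
  le_trans : forall d e f, le d e -> le e f -> le d f;
  le_antisym : forall d e, le d e -> le e d -> d = e;
  le_fin : forall e, exists l : list E, forall d, le d e -> In d l;
  cf_irrefl : forall e, ~ cf e e;
  cf_sym : forall d e, cf d e -> cf e d;
  cf_hered : forall d e f, le d e -> cf d f -> cf e f
}.

Definition concurrent E (S : pes E) (d e : E) : Prop :=
  ~ le S d e /\ ~ le S e d /\ ~ cf S d e.

Definition configuration E (S : pes E) (C : E -> Prop) : Prop :=
  (exists l : list E, forall x, C x -> In x l) /\
  (forall d e, C d -> C e -> ~ cf S d e) /\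
  (forall d e, le S d e -> C e -> C d).

(* assertions: subsets of E; conditions: pairs (L,R); terms: elements of E *)
Definition assertion E := E -> Prop.
Definition condition E := (assertion E * assertion E)%type.

Definition unit_assn E : assertion E := fun _ => False.
Definition comp_assn E (A B : assertion E) : assertion E := fun x => A x \/ B x.

Definition entails E (Psi : assertion E) (phi : condition E) : Prop :=
  (forall x, fst phi x -> Psi x) /\ (forall x, Psi x -> snd phi x -> False).

Inductive proc (E : Type) : Type :=
| PAssert : assertion E -> proc E
| POut : E -> E -> proc E -> proc E
| PCase : list (condition E * proc E) -> proc E
| PPar : proc E -> proc E -> proc E
| PFam : (E -> proc E) -> proc E.                 (* E-indexed parallel family *)

Fixpoint frame E (P : proc E) : assertion E :=
  match P with
  | PAssert Psi => Psi
  | POut _ _ _ => @unit_assn E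
  | PCase _ => @unit_assn E
  | PPar P Q => comp_assn (frame P) (frame Q)
  | PFam F => fun x => exists y, frame (F y) x
  end.

Definition frame_others E (F : E -> proc E) (i : E) : assertion E :=
  fun x => exists y, y <> i /\ frame (F y) x.

Definition update E (F : E -> proc E) (i : E) (P : proc E) : E -> proc E :=
  fun y => match excluded_middle_informative (y = i) with
           | left _ => P
           | right _ => F y
           end.

(* labels: output labels  out K N, represented as the pair (K, N) *)
Definition label E := (E * E)%type.

Inductive trans E : assertion E -> proc E -> label E -> proc E -> Prop :=
| tr_out : forall Psi M K N P, M = K ->       (* Psi |- M <-> K  iff  M = K *)
    trans Psi (POut M N P) (K, N) P
| tr_case : forall Psi cs phi Pi a P',
    In (phi, Pi) cs -> trans Psi Pi a P' -> entails Psi phi ->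
    trans Psi (PCase cs) a P'
| tr_parL : forall Psi P Q a P',
    trans (comp_assn Psi (frame Q)) P a P' -> trans Psi (PPar P Q) a (PPar P' Q)
| tr_parR : forall Psi P Q a Q',
    trans (comp_assn Psi (frame P)) Q a Q' -> trans Psi (PPar P Q) a (PPar P Q')
| tr_fam : forall Psi F i a P',
    trans (comp_assn Psi (frame_others F i)) (F i) a P' ->
    trans Psi (PFam F) a (PFam (update F i P')).

Definition phi_e E (S : pes E) (e : E) : condition E :=
  (fun d => le S d e /\ d <> e, fun d => cf S d e).

Definition P_e E (S : pes E) (C : E -> Prop) (e : E) : proc E :=
  match excluded_middle_informative (C e) with
  | left _ => PAssert (fun d => d = e)
  | right _ => PCase [(phi_e S e, POut e e (PAssert (fun d => d = e)))]
  end.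

Definition espsi E (S : pes E) (C : E -> Prop) : proc E := PFam (P_e S C).

(* Main.v *)
Require Import Defs.
From Stdlib Require Import List ClassicalEpsilon FunctionalExtensionality.
Import ListNotations.

Lemma fire E (S : pes E) (G : E -> proc E) i :
  G i = PCase [(phi_e S i, POut i i (PAssert (fun d => d = i)))] ->
  (forall d, le S d i -> d <> i -> exists y, y <> i /\ frame (G y) d) ->
  (forall x y, y <> i -> frame (G y) x -> cf S x i -> False) ->
  trans (@unit_assn E) (PFam G) (i, i) (PFam (update G i (PAssert (fun d => d = i)))).
Proof.
  intros HG HL HR. apply tr_fam. rewrite HG.
  eapply tr_case; [left; reflexivity| apply tr_out; reflexivity |].
  split; simpl.
  - intros x [H1 H2]. right. destruct (HL x H1 H2) as [y [? ?]]. exists y; auto.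
  - intros x [[]|[y [Hy Hf]]] Hc. eapply HR; eauto.
Qed.

Lemma frame_Pe E (S : pes E) C y x : frame (P_e S C y) x -> C y /\ x = y.
Proof. unfold P_e. destruct (excluded_middle_informative (C y)); simpl; unfold unit_assn; tauto. Qed.

Lemma frame_Pe' E (S : pes E) C y : C y -> frame (P_e S C y) y.
Proof. unfold P_e. destruct (excluded_middle_informative (C y)); simpl; unfold unit_assn; tauto. Qed.

Lemma Pe_not E (S : pes E) C y : ~ C y ->
  P_e S C y = PCase [(phi_e S y, POut y y (PAssert (fun d => d = y)))].
Proof. unfold P_e. destruct (excluded_middle_informative (C y)); tauto. Qed.

Lemma upd_eq E (G : E -> proc E) i P : update G i P i = P.
Proof. unfold update. destruct (excluded_middle_informative (i = i)); congruence. Qed.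

Lemma upd_neq E (G : E -> proc E) i P y : y <> i -> update G i P y = G y.
Proof. unfold update. destruct (excluded_middle_informative (y = i)); congruence. Qed.

Theorem mainTheorem3 (E : Type) (S : pes E) (e e' : E) :
  concurrent S e e' ->
  exists C : E -> Prop, configuration S C /\
  exists P1 P2 P3 P4 : proc E,
    trans (@unit_assn E) (espsi S C) (e, e) P1 /\
    trans (@unit_assn E) P1 (e', e') P2 /\
    trans (@unit_assn E) (espsi S C) (e', e') P3 /\
    trans (@unit_assn E) P3 (e, e) P4 /\
    P2 = P4.
Proof.
  intros [H1 [H2 H3]].
  assert (Hne : e <> e'). { intro; subst. apply H1, le_refl. }
  set (C := fun x => (le S x e /\ x <> e) \/ (le S x e' /\ x <> e')).
  assert (Cconf : forall x f, C x -> cf S x f -> f <> e /\ f <> e').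
  { intros x f [[Hx _]|[Hx _]] Hc; split; intro; subst.
    - apply (cf_irrefl S e). exact (cf_hered S _ _ _ Hx Hc).
    - apply H3. exact (cf_hered S _ _ _ Hx Hc).
    - apply H3. apply cf_sym. exact (cf_hered S _ _ _ Hx Hc).
    - apply (cf_irrefl S e'). exact (cf_hered S _ _ _ Hx Hc). }
  assert (Ce : ~ C e). { intros [[_ ?]|[? _]]; tauto. }
  assert (Ce' : ~ C e'). { intros [[? _]|[_ ?]]; tauto. }
  exists C. split.
  { split; [|split].
    - destruct (le_fin S e) as [l1 Hl1]. destruct (le_fin S e') as [l2 Hl2].
      exists (l1 ++ l2). intros x [[Hx _]|[Hx _]]; apply in_or_app; auto.
    - intros d f Hd Hf Hc.
      assert (K : forall a b, le S d a -> le S f b -> cf S a b).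
      { intros a b Ha Hb. apply (cf_hered S _ _ _ Ha). apply cf_sym.
        apply (cf_hered S _ _ _ Hb). apply cf_sym; auto. }
      destruct Hd as [[Hd _]|[Hd _]]; destruct Hf as [[Hf _]|[Hf _]].
      + exact (cf_irrefl S _ (K _ _ Hd Hf)).
      + exact (H3 (K _ _ Hd Hf)).
      + exact (H3 (cf_sym S _ _ (K _ _ Hd Hf))).
      + exact (cf_irrefl S _ (K _ _ Hd Hf)).
    - intros d f Hdf [[Hf Hn]|[Hf Hn]]; [left|right]; split.
      + exact (le_trans S _ _ _ Hdf Hf).
      + intro; subst. apply Hn. apply (le_antisym S); auto.
      + exact (le_trans S _ _ _ Hdf Hf).
      + intro; subst. apply Hn. apply (le_antisym S); auto. }
  set (F := P_e S C).
  set (Ae := PAssert (fun d => d = e)).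
  set (Ae' := PAssert (fun d => d = e')).
  exists (PFam (update F e Ae)), (PFam (update (update F e Ae) e' Ae')),
    (PFam (update F e' Ae')), (PFam (update (update F e' Ae') e Ae)).
  split; [|split; [|split; [|split]]].
  - apply (@fire E S).
    + apply Pe_not; auto.
    + intros d Hd Hn. exists d. split; auto. apply frame_Pe'. left; auto.
    + intros x y _ Hf Hc. apply frame_Pe in Hf as [Hy ->].
      destruct (Cconf y e Hy Hc); tauto.
  - apply (@fire E S).
    + rewrite upd_neq; auto. apply Pe_not; auto.
    + intros d Hd Hn. exists d. split; auto.
      assert (d <> e). { intro; subst; auto. }
      rewrite upd_neq; auto. apply frame_Pe'. right; auto.
    + intros x y Hy Hf Hc. unfold update in Hf.
      destruct (excluded_middle_informative (y = e)).
      * simpl in Hf; subst. auto.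
      * apply frame_Pe in Hf as [Hy' ->]. destruct (Cconf y e' Hy' Hc); tauto.
  - apply (@fire E S).
    + apply Pe_not; auto.
    + intros d Hd Hn. exists d. split; auto. apply frame_Pe'. right; auto.
    + intros x y _ Hf Hc. apply frame_Pe in Hf as [Hy ->].
      destruct (Cconf y e' Hy Hc); tauto.
  - apply (@fire E S).
    + rewrite upd_neq; auto. apply Pe_not; auto.
    + intros d Hd Hn. exists d. split; auto.
      assert (d <> e'). { intro; subst; auto. }
      rewrite upd_neq; auto. apply frame_Pe'. left; auto.
    + intros x y Hy Hf Hc. unfold update in Hf.
      destruct (excluded_middle_informative (y = e')).
      * simpl in Hf; subst. apply H3, cf_sym; auto.
      * apply frame_Pe in Hf as [Hy' ->]. destruct (Cconf y e Hy' Hc); tauto.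
  - f_equal. apply functional_extensionality. intro y. unfold update.
    destruct (excluded_middle_informative (y = e'));
    destruct (excluded_middle_informative (y = e)); subst; try congruence.
Qed.
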